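(* Assume (A1)–(A3) below. For any $\omega\in\Delta^{L-1}$ and any two positive definite matrices $W_1,W_2$ with $\lambda(W_1)=\lambda(W_2)=\omega$, $$V(W_1;\Omega_\omega)=V(W_2;\Omega_\omega)=\omega'D^{-1}\Omega_\omega D^{-1}\omega,$$ where $D=\mathrm{diag}(\gamma_1,\dots,\gamma_L)$ and $\Omega_\omega=\Omega(\beta^*(\omega))$.
   Context: Observe i.i.d. $(Y_i,D_i,\mathbf Z_i)$ with $Y_i\in\mathbb R$, $D_i\in\{0,1\}$, $\mathbf Z_i=(Z_{1i},\dots,Z_{Li})'\in\{0,1\}^L$, $L\ge2$; potential outcomes $Y_i(0),Y_i(1)$, compliance type $D_i(\cdot):\{0,1\}^L\to\{0,1\}$, $D_i=D_i(\mathbf Z_i)$, $Y_i=D_iY_i(1)+(1-D_i)Y_i(0)$. $p_\ell=P(Z_{\ell i}=1)$, $\pi_\ell,\rho_\ell$ the differences of $\mathbb E[D_i\mid Z_{\ell i}=z]$, $\mathbb E[Y_i\mid Z_{\ell i}=z]$ between $z=1$ and $0$, $\mathrm{Wald}_\ell=\rho_\ell/\pi_\ell$, $\gamma_\ell=\mathrm{Cov}(D_i,Z_{\ell i})$, $\boldsymbol\gamma=(\gamma_\ell)_\ell$, $\Sigma_Z=\mathrm{Var}(\mathbf Z_i)$. $g_i(\beta)$ is the vector with entries $(Y_i-\beta D_i)(Z_{\ell i}-p_\ell)$, $\Omega(\beta)=\mathbb E[g_i(\beta)g_i(\beta)']$. $\lambda_\ell(W)=\gamma_\ell[W\boldsymbol\gamma]_\ell/(\boldsymbol\gamma'W\boldsymbol\gamma)$;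 $\Delta^{L-1}$ is the probability simplex in $\mathbb R^L$; $\beta^*(\omega)=\sum_\ell\omega_\ell\mathrm{Wald}_\ell$. The sandwich variance is $V(W;\Omega)=\boldsymbol\gamma'W\Omega W\boldsymbol\gamma/(\boldsymbol\gamma'W\boldsymbol\gamma)^2$. Assumptions: (A1) $(Y_i(0),Y_i(1),D_i(\cdot))$ independent of $\mathbf Z_i$. (A2) $D_i(z)$ nondecreasing in each coordinate for every $i$. (A3) $p_\ell>0$, $\pi_\ell>0$ for all $\ell$; $\Sigma_Z$ positive definite. *)

(* Defs.v *)
From HB Require Import structures.
From mathcomp Require Import all_boot all_order all_algebra.
From mathcomp Require Import all_classical all_reals all_analysis.
Set Implicit Arguments. Unset Strict Implicit. Unset Printing Implicit Defensive.
Import Order.TTheory GRing.Theory Num.Theory.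
Local Open Scope ring_scope.
Local Open Scope classical_set_scope.

Section IVModel.
Context (L : nat) {d : measure_display} {T : measurableType d} {R : realType}
  (P : probability T R).

(* Primitives of one observation i (all population quantities only depend on
   the common law of the i.i.d. observations):
   Y0, Y1 potential outcomes, Ctype the compliance type D_i(.) : {0,1}^L -> {0,1},
   Zb l the instrument Z_{l i} (as a boolean). *)
Variables (Y0 Y1 : T -> R) (Ctype : T -> {ffun {ffun 'I_L -> bool} -> bool})
  (Zb : 'I_L -> T -> bool).

Definition Ef (X : T -> R) : R := fine ('E_P[X])%E.
Definition prob (A : set T) : R := fine (P A).

Definition condE (X : T -> R) (b : T -> bool) : R :=
  Ef (fun t => X t * (b t)%:R) / prob [set t | b t].

Definition zvec (t : T) : {ffun 'I_L -> bool} := [ffun l => Zb l t].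
Definition Zr (l : 'I_L) (t : T) : R := (Zb l t)%:R.
Definition Dobs (t : T) : R := (Ctype t (zvec t))%:R.
Definition Yobs (t : T) : R := Dobs t * Y1 t + (1 - Dobs t) * Y0 t.

Definition pZ (l : 'I_L) : R := prob [set t | Zb l t].
Definition piZ (l : 'I_L) : R :=
  condE Dobs (Zb l) - condE Dobs (fun t => ~~ Zb l t).
Definition rhoZ (l : 'I_L) : R :=
  condE Yobs (Zb l) - condE Yobs (fun t => ~~ Zb l t).
Definition Wald (l : 'I_L) : R := rhoZ l / piZ l.

Definition gam : 'cV[R]_L := \col_l fine (covariance P Dobs (Zr l)).
Definition SigmaZ : 'M[R]_L := \matrix_(l, k) fine (covariance P (Zr l) (Zr k)).

Definition gmom (beta : R) (l : 'I_L) (t : T) : R :=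
  (Yobs t - beta * Dobs t) * (Zr l t - pZ l).
Definition Omega (beta : R) : 'M[R]_L :=
  \matrix_(l, k) Ef (fun t => gmom beta l t * gmom beta k t).

Definition betastar (om : 'cV[R]_L) : R := \sum_l om l 0 * Wald l.

(* (A1): (Y_i(0), Y_i(1), D_i(.)) independent of Z_i, stated on the generating
   pi-system {Y0 in A, Y1 in B, D(.) = c} x {Z = z} *)
Definition A1_indep : Prop :=
  forall (A B : set R), measurable A -> measurable B ->
  forall (c : {ffun {ffun 'I_L -> bool} -> bool}) (z : {ffun 'I_L -> bool}),
    P ([set t | A (Y0 t) /\ B (Y1 t) /\ Ctype t = c] `&` [set t | zvec t = z])
    = (P [set t | A (Y0 t) /\ B (Y1 t) /\ Ctype t = c] * P [set t | zvec t = z])%E.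

Definition A2_monotone : Prop :=
  forall t (z z' : {ffun 'I_L -> bool}),
    (forall l, z l ==> z' l) -> Ctype t z ==> Ctype t z'.

End IVModel.

Section MatrixDefs.
Context {R : realType} {L : nat}.
Definition qf (u : 'cV[R]_L) (A : 'M[R]_L) (v : 'cV[R]_L) : R := (u^T *m A *m v) 0 0.
Definition posdef (A : 'M[R]_L) : Prop :=
  A^T = A /\ forall x : 'cV[R]_L, x != 0 -> 0 < qf x A x.
Definition lambdaW (g : 'cV[R]_L) (W : 'M[R]_L) : 'cV[R]_L :=
  \col_l (g l 0 * (W *m g) l 0 / qf g W g).
Definition Vsand (g : 'cV[R]_L) (W Om : 'M[R]_L) : R :=
  qf g (W *m Om *m W) g / (qf g W g) ^+ 2.
Definition in_simplex (om : 'cV[R]_L) : Prop :=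
  (forall l, 0 <= om l 0) /\ \sum_l om l 0 = 1.
End MatrixDefs.

(* Main.v *)
Require Import Defs.
From HB Require Import structures.
From mathcomp Require Import all_boot all_order all_algebra.
From mathcomp Require Import all_classical all_reals all_analysis.
From mathcomp Require Import ring.
Import Order.TTheory GRing.Theory Num.Theory.
Local Open Scope ring_scope.
Local Open Scope classical_set_scope.

Section Prob.
Context {d : measure_display} {T : measurableType d} {R : realType}
  (P : probability T R).

Definition ind (b : T -> bool) : T -> R := fun t => (b t)%:R.

Lemma ind_indic (b : T -> bool) : ind b = \1_[set t | b t].
Proof. apply/funext => t; rewrite /ind indicE; have [bt|bt] := boolP (b t); first by rewrite mem_set. by rewrite memNset //; apply/negP. Qed.

Lemma ind_Lfun (b : T -> bool) : measurable [set t | b t] -> ind b \in Lfun P 1.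
Proof.
move=> mb; apply/Lfun1_integrable.
apply: measurable_bounded_integrable => //.
- by apply: (le_lt_trans (probability_le1 P measurableT)); rewrite ltry.
- by rewrite ind_indic; exact: measurable_realfun.measurable_indic.
- exists 1; split => // M M1 t _ /=.
  by rewrite /ind; case: (b t); rewrite ?normr1 ?normr0 ltW // (lt_trans _ M1).
Qed.

Lemma probE A : measurable A -> P A = (prob P A)%:E.
Proof. by move=> mA; rewrite /prob fineK // fin_num_measure. Qed.

Lemma Ef_ind (b : T -> bool) : measurable [set t | b t] -> Ef P (ind b) = prob P [set t | b t].
Proof. by move=> mb; rewrite /Ef ind_indic expectation_indic. Qed.

Lemma ind_mul (b1 b2 : T -> bool) : (ind b1 * ind b2)%R = ind (fun t => b1 t && b2 t).
Proof. by apply/funext => t; rewrite /ind fctE -natrM mulnb. Qed.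

Lemma cov_ind (b1 b2 : T -> bool) : measurable [set t | b1 t] -> measurable [set t | b2 t] ->
  fine (covariance P (ind b1) (ind b2)) =
  prob P [set t | b1 t && b2 t] - prob P [set t | b1 t] * prob P [set t | b2 t].
Proof.
move=> m1 m2.
have m12 : measurable [set t | b1 t && b2 t].
  have -> : [set t | b1 t && b2 t] = [set t | b1 t] `&` [set t | b2 t].
    by apply/seteqP; split => t /=; case/andP || move=> [-> ->].
  exact: measurableI.
rewrite covarianceE ?ind_Lfun // ?ind_mul ?ind_Lfun //.
rewrite !ind_indic !expectation_indic // !probE //.
Qed.

Lemma prob_split (b z : T -> bool) : measurable [set t | b t] -> measurable [set t | z t] ->
  prob P [set t | b t] = prob P [set t | b t && z t] + prob P [set t | b t && ~~ z t].
Proof.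
move=> mb mz.
have mI : forall z' : T -> bool, measurable [set t | z' t] -> measurable [set t | b t && z' t].
  move=> z' mz'; have -> : [set t | b t && z' t] = [set t | b t] `&` [set t | z' t].
    by apply/seteqP; split => t /=; case/andP || move=> [-> ->].
  exact: measurableI.
have mnz : measurable [set t | ~~ z t].
  have -> : [set t | ~~ z t] = ~` [set t | z t].
    by apply/seteqP; split => t /=; case: (z t).
  exact: measurableC.
have m1 := mI z mz; have m2 := mI _ mnz.
rewrite /prob -fineD ?fin_num_measure //.
rewrite -measureU //.
  congr (fine (P _)); apply/seteqP; split => t /=.
    by move=> bt; rewrite bt; case: (z t); [left|right].
  by case=> /andP[].
apply/seteqP; split => t //= [/andP[_ zt] /andP[_ nzt]].
by rewrite zt in nzt.
Qed.

Lemma prob_not (z : T -> bool) : measurable [set t | z t] ->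
  prob P [set t | ~~ z t] = 1 - prob P [set t | z t].
Proof.
move=> mz.
have -> : [set t | ~~ z t] = ~` [set t | z t].
  by apply/seteqP; split => t /=; case: (z t).
by rewrite /prob probability_setC // probE // -EFinB.
Qed.

Lemma mD (L : nat) (Ctype : T -> {ffun {ffun 'I_L -> bool} -> bool})
  (Zb : 'I_L -> T -> bool) :
  (forall l, measurable [set t | Zb l t]) ->
  (forall c, measurable [set t | Ctype t = c]) ->
  measurable [set t | Ctype t (zvec Zb t)].
Proof.
move=> mZ mC.
have mz : forall z : {ffun 'I_L -> bool}, measurable [set t | zvec Zb t = z].
  move=> z.
  have -> : [set t | zvec Zb t = z] = \bigcap_(l in [set: 'I_L]) [set t | Zb l t = z l].
    apply/seteqP; split => t /=.
      by move=> <- l _; rewrite /zvec ffunE.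
    by move=> H; apply/ffunP => l; rewrite /zvec ffunE; apply: H.
  apply: fin_bigcap_measurable; first exact: finite_finset. move=> l _.
  case: (z l).
    by have -> : [set t | Zb l t = true] = [set t | Zb l t] by [].
  have -> : [set t | Zb l t = false] = ~` [set t | Zb l t].
    by apply/seteqP; split => t /=; case: (Zb l t).
  exact: measurableC.
have -> : [set t | Ctype t (zvec Zb t)] =
  \bigcup_(c in [set: {ffun {ffun 'I_L -> bool} -> bool}])
    \bigcup_(z in [set z | c z]) ([set t | Ctype t = c] `&` [set t | zvec Zb t = z]).
  apply/seteqP; split => t /=.
    by move=> H; exists (Ctype t) => //; exists (zvec Zb t).
  by move=> [c _ [z /= cz [-> ->]]].
apply: fin_bigcup_measurable; first exact: finite_finset.
move=> c _; apply: fin_bigcup_measurable; first exact: finite_finset.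
move=> z _; exact: measurableI.
Qed.

Lemma measI (b z : T -> bool) : measurable [set t | b t] -> measurable [set t | z t] ->
  measurable [set t | b t && z t].
Proof.
move=> mb mz; have -> : [set t | b t && z t] = [set t | b t] `&` [set t | z t].
  by apply/seteqP; split => t /=; case/andP || move=> [-> ->].
exact: measurableI.
Qed.

Lemma measN (z : T -> bool) : measurable [set t | z t] -> measurable [set t | ~~ z t].
Proof.
move=> mz; have -> : [set t | ~~ z t] = ~` [set t | z t].
  by apply/seteqP; split => t /=; case: (z t).
exact: measurableC.
Qed.

Lemma gam_nz (L : nat) (Ctype : T -> {ffun {ffun 'I_L -> bool} -> bool})
  (Zb : 'I_L -> T -> bool)
  (mZ : forall l, measurable [set t | Zb l t])
  (mC : forall c, measurable [set t | Ctype t = c])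
  (A3p : forall l, 0 < pZ P Zb l)
  (A3pi : forall l, 0 < piZ P Ctype Zb l)
  (A3S : posdef (SigmaZ P Zb)) l :
  gam P Ctype Zb l 0 != 0.
Proof.
set z := Zb l.
set bD := fun t => Ctype t (zvec Zb t).
have mb : measurable [set t | bD t] by apply: mD.
have mz : measurable [set t | z t] := mZ l.
have Hg : gam P Ctype Zb l 0 =
   prob P [set t | bD t && z t] - prob P [set t | bD t] * prob P [set t | z t].
  by rewrite mxE -cov_ind.
have HS : SigmaZ P Zb l l = prob P [set t | z t] - prob P [set t | z t] ^+ 2.
  rewrite mxE cov_ind // expr2; congr (prob P _ - _).
  by apply/seteqP; split => t /=; rewrite andbb.
have HSpos : 0 < SigmaZ P Zb l l.
  have := A3S.2 (delta_mx l 0).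
  have -> : qf (delta_mx l 0) (SigmaZ P Zb) (delta_mx l 0) = SigmaZ P Zb l l.
    by rewrite /qf trmx_delta -rowE -colE !mxE.
  apply; apply/negP => /eqP/matrixP/(_ l 0); rewrite !mxE !eqxx /=.
  by move/eqP; rewrite oner_eq0.
have Hpi : piZ P Ctype Zb l =
   prob P [set t | bD t && z t] / prob P [set t | z t]
   - prob P [set t | bD t && ~~ z t] / prob P [set t | ~~ z t].
  rewrite /piZ /condE.
  have -> : (fun t => Dobs Ctype Zb t * (Zb l t)%:R) = ind (fun t => bD t && z t).
    by apply/funext => t; rewrite /ind -natrM mulnb.
  have -> : (fun t => Dobs Ctype Zb t * (~~ Zb l t)%:R) = ind (fun t => bD t && ~~ z t).
    by apply/funext => t; rewrite /ind -natrM mulnb.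
  by rewrite !Ef_ind //; apply: measI => //; exact: measN.
have hpi := A3pi l.
have hp : 0 < prob P [set t | z t] := A3p l.
move: hpi HSpos; rewrite Hpi Hg HS prob_not // (prob_split bD z) //.
set a := prob P [set t | bD t && z t].
set a' := prob P [set t | bD t && ~~ z t].
set p := prob P [set t | z t].
move=> hpi hS.
have q0 : 0 < 1 - p by rewrite -(pmulr_rgt0 _ hp) mulrBr mulr1 -expr2.
have -> : a - (a + a') * p = (p - p ^+ 2) * (a / p - a' / (1 - p)).
  have p0 : p != 0 by rewrite gt_eqF.
  have p1 : 1 - p != 0 by rewrite gt_eqF.
  by field; rewrite p1 p0.
by rewrite mulf_neq0 // gt_eqF.
Qed.

End Prob.

Lemma Vsand_eq (R : realType) (L : nat) (g om : 'cV[R]_L) (W Om : 'M[R]_L) :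
  (0 < L)%N -> (forall l, g l 0 != 0) -> posdef W -> lambdaW g W = om ->
  Vsand g W Om = qf om (invmx (diag_mx g^T) *m Om *m invmx (diag_mx g^T)) om.
Proof.
move=> L0 gnz [WT Wpd] Hl.
set c := qf g W g.
have gn0 : g != 0.
  apply/negP => /eqP g0; have := gnz (Ordinal L0); by rewrite g0 mxE eqxx.
have c0 : c != 0 by rewrite gt_eqF // /c; exact: Wpd.
set Dm := diag_mx g^T.
have Du : Dm \in unitmx.
  by rewrite unitmxE det_diag unitfE; apply/prodf_neq0 => i _; rewrite mxE.
have HD : Dm *m (W *m g) = c *: om.
  apply/matrixP => i j; rewrite mul_diag_mx !mxE (ord1 j).
  by rewrite -Hl !mxE -/c [RHS]mulrC divfK.
have Hw : W *m g = c *: (invmx Dm *m om).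
  by rewrite -(mulKmx Du (W *m g)) HD scalemxAr.
rewrite /Vsand /qf.
have -> : g^T *m (W *m Om *m W) *m g = (W *m g)^T *m Om *m (W *m g).
  by rewrite trmx_mul WT !mulmxA.
rewrite Hw.
have HT : (c *: (invmx Dm *m om))^T = c *: (om^T *m invmx Dm).
  by rewrite linearZ /= trmx_mul trmx_inv tr_diag_mx.
rewrite HT -!scalemxAl -scalemxAr !mulmxA scalerA mxE.
change ((g^T *m W *m g) 0 0) with c.
by rewrite expr2 [c * c * _]mulrC mulfK // mulf_neq0.
Qed.

Theorem proposition7 (L : nat) (d : measure_display) (T : measurableType d)
  (R : realType) (P : probability T R)
  (Y0 Y1 : T -> R) (Ctype : T -> {ffun {ffun 'I_L -> bool} -> bool})
  (Zb : 'I_L -> T -> bool)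
  (HL : (2 <= L)%N)
  (mY0 : measurable_fun setT Y0) (mY1 : measurable_fun setT Y1)
  (mZ : forall l, measurable [set t | Zb l t])
  (mC : forall c, measurable [set t | Ctype t = c])
  (A1 : A1_indep P Y0 Y1 Ctype Zb)
  (A2 : A2_monotone Ctype)
  (A3p : forall l, 0 < pZ P Zb l)
  (A3pi : forall l, 0 < piZ P Ctype Zb l)
  (A3S : posdef (SigmaZ P Zb))
  (om : 'cV[R]_L) (Hom : in_simplex om)
  (W1 W2 : 'M[R]_L) (HW1 : posdef W1) (HW2 : posdef W2)
  (Hl1 : lambdaW (gam P Ctype Zb) W1 = om)
  (Hl2 : lambdaW (gam P Ctype Zb) W2 = om) :
  let g := gam P Ctype Zb in
  let Dm := diag_mx g^T in
  let Om := Omega P Y0 Y1 Ctype Zb (betastar P Y0 Y1 Ctype Zb om) in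
  Vsand g W1 Om = Vsand g W2 Om /\
  Vsand g W2 Om = qf om (invmx Dm *m Om *m invmx Dm) om.
Proof.
move=> g Dm Om.
have L0 : (0 < L)%N by apply: leq_trans HL.
have gnz : forall l, g l 0 != 0.
  by move=> l; apply: gam_nz.
have E1 : Vsand g W1 Om = qf om (invmx Dm *m Om *m invmx Dm) om.
  by apply: Vsand_eq.
have E2 : Vsand g W2 Om = qf om (invmx Dm *m Om *m invmx Dm) om.
  by apply: Vsand_eq.
by split; [rewrite E1 E2 | exact: E2].
Qed.
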